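(* For every typed DAG task $G=(V,E,\gamma,c)$ and every platform with $M_s\ge 1$ cores of each type $s\in S$, \[ \max_{\pi}\Big(len(\pi)+\sum_{s\in S}\sum_{v\in\mathrm{ivs}(\pi,s)}\frac{c(v)}{M_s}\Big)\;\le\; len(\hat G)+\sum_{s\in S}\frac{vol_s(G)}{M_s}, \] (maximum over paths $\pi$ of $G$), and there exist typed DAG tasks and platforms for which the inequality is strict.
   Context: A typed DAG task is $G=(V,E,\gamma,c)$ where $(V,E)$ is a finite directed acyclic graph with a unique source and a unique sink, $S$ is a finite set of core types, $\gamma:V\to S$ gives the type of each vertex, and $c:V\to\mathbb{R}_{\ge0}$ gives the WCET of each vertex. $vol_s(G)=\sum_{u\in V,\gamma(u)=s}c(u)$; for a path $\pi$, $len(\pi)=\sum_{u\in\pi}c(u)$. The scaled graph $\hat G$ has the same vertices, edges and types as $G$ with weights $\hat c(v)=c(v)(1-1/M_{\gamma(v)})$, and $len(\hat G)$ is its longest path length w.r.t. $\hat c$. $\mathrm{ans}(u)$, $\mathrm{des}(u)$ denote ancestors and descendants of $u$. For $v\in V$, $\mathrm{par}(v)=\{u\in V: u\ne v,\ \gamma(u)=\gamma(v),\ u\notin \mathrm{ans}(v)\cup\mathrm{des}(v)\}$; for a path $\pi=(\tau_1,\dots,\tau_k)$, $\mathrm{ivs}(\pi,s)=\bigcup_{i:\gamma(\tau_i)=s}\mathrm{par}(\tau_i)$. (The left side is the bound NEW-B-2, the right side NEW-B-1; the paper states ''NEW-B-2 strictly dominates NEW-B-1''.) *)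

(* Defs.v *)
From mathcomp Require Import all_boot all_order all_algebra.
Set Implicit Arguments. Unset Strict Implicit. Unset Printing Implicit Defensive.
Import Order.TTheory GRing.Theory Num.Theory.
Local Open Scope ring_scope.

Section TypedDAG.
Variables (R : realFieldType) (V S : finType).
Implicit Types (e : rel V) (gamma : V -> S) (c : V -> R) (M : S -> nat).

Definition is_path e (p : seq V) : bool :=
  if p is x :: p' then path e x p' else false.

Definition acyclic e : bool :=
  [forall x, forall y, e x y ==> ~~ connect e y x].

Definition sources e : {set V} := [set v | [forall u, ~~ e u v]].
Definition sinks e : {set V} := [set v | [forall u, ~~ e v u]].

Definition typed_dag e : bool :=
  [&& acyclic e, #|sources e| == 1%N & #|sinks e| == 1%N].

Definition par e gamma (v : V) : {set V} :=
  [set u | [&& u != v, gamma u == gamma v, ~~ connect e u v & ~~ connect e v u]].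

Definition ivs e gamma (p : seq V) (s : S) : {set V} :=
  \bigcup_(x <- p | gamma x == s) par e gamma x.

Definition plen (w : V -> R) (p : seq V) : R := \sum_(x <- p) w x.

(* maximum of f over all paths of G (paths in a DAG have at most #|V|
   vertices; the default 0 is harmless since all values are >= 0). *)
Definition maxpath e (f : seq V -> R) : R :=
  \big[Num.max/0]_(n < #|V|.+1)
     \big[Num.max/0]_(t : n.-tuple V | is_path e t) f t.

Definition vol gamma c (s : S) : R := \sum_(u | gamma u == s) c u.

(* scaled weights of \hat G *)
Definition chat gamma c M (v : V) : R := c v * (1 - ((M (gamma v))%:R)^-1).

Definition len_hat e gamma c M : R := maxpath e (plen (chat gamma c M)).

Definition newB2 e gamma c M : R :=
  maxpath e (fun p => plen c p +
     \sum_(s : S) \sum_(v in ivs e gamma p s) c v / (M s)%:R).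

Definition newB1 e gamma c M : R :=
  len_hat e gamma c M + \sum_(s : S) vol gamma c s / (M s)%:R.

End TypedDAG.

(* Main.v *)
Require Import Defs.
From mathcomp Require Import all_boot all_order all_algebra.
From mathcomp Require Import lra.
Import Order.TTheory GRing.Theory Num.Theory.
Local Open Scope ring_scope.

Section Gen.
Local Set Implicit Arguments.
Variables (V : finType).

Lemma path_uniq (e : rel V) : acyclic e -> forall x p, path e x p -> uniq (x :: p).
Proof.
move=> acyc x p; elim: p x => [|y p IH] x //= /andP[exy pp].
have := IH y pp; rewrite /= => ->; rewrite andbT.
apply/negP => xin.
have cyx : connect e y x by apply: (path_connect pp).
move/forallP: acyc => /(_ x) /forallP /(_ y).
by rewrite exy cyx.
Qed.

Lemma path_comp (e : rel V) x p : path e x p ->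
  forall y z, y \in x :: p -> z \in x :: p -> connect e y z || connect e z y.
Proof.
elim: p x => [|w p IH] x.
  by move=> _ y z; rewrite !inE => /eqP -> /eqP ->; rewrite connect0.
move=> pp y z; rewrite inE => /orP [/eqP -> | yin].
  by move=> zin; rewrite (path_connect pp zin).
rewrite inE => /orP [/eqP -> | zin].
  by rewrite (path_connect pp) ?orbT // inE yin orbT.
by move: pp => /= /andP[_ pp]; exact: (IH w pp y z yin zin).
Qed.

Lemma ivs_mem (S : finType) (e : rel V) (gamma : V -> S) p s v :
  v \in ivs e gamma p s -> exists2 x, x \in p & (gamma x == s) && (v \in par e gamma x).
Proof.
rewrite /ivs; elim: p => [|y p IH]; first by rewrite big_nil inE.
rewrite big_cons; case: ifP => gy.
  rewrite inE => /orP [vin | /IH [x xin H]].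
    by exists y; [rewrite mem_head | rewrite gy vin].
  by exists x => //; rewrite inE xin orbT.
by move=> /IH [x xin H]; exists x => //; rewrite inE xin orbT.
Qed.

Variable R : realFieldType.

Lemma path_bound (S : finType) (e : rel V) (gamma : V -> S) (c : V -> R) (M : S -> nat)
  (t : seq V) :
  acyclic e -> (forall v, 0 <= c v) -> (forall s, (1 <= M s)%N) -> is_path e t ->
  plen c t + \sum_(s : S) \sum_(v in ivs e gamma t s) c v / (M s)%:R
  <= plen (chat gamma c M) t + \sum_(s : S) vol gamma c s / (M s)%:R.
Proof.
move=> acyc c0 M1 pt.
have ut : uniq t by case: t pt => // x p; apply: path_uniq.
have comp : forall y z, y \in t -> z \in t -> connect e y z || connect e z y.
  by case: t pt {ut} => // x p; apply: path_comp.
have -> : plen c t = plen (chat gamma c M) t + \sum_(x <- t) c x / (M (gamma x))%:R.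
  rewrite /plen -big_split /=; apply: eq_bigr => x _.
  by rewrite /chat mulrBr mulr1 subrK.
rewrite -addrA lerD2l.
rewrite big_uniq //= (partition_big gamma xpredT) //= -big_split /=.
apply: ler_sum => s _.
rewrite /vol mulr_suml.
rewrite (eq_bigr (fun x => c x / (M s)%:R)); last by move=> x /andP[_ /eqP ->].
rewrite big_mkcond [X in _ + X <= _]big_mkcond [X in _ <= X]big_mkcond -big_split /=.
apply: ler_sum => x _.
have f0 : 0 <= c x / (M s)%:R by rewrite divr_ge0.
case: (boolP (x \in ivs e gamma t s)) => xi.
  have [y yin /andP[/eqP gy]] := ivs_mem xi.
  rewrite inE => /and4P [_ /eqP gxy nc1 nc2].
  have xnt : x \notin t.
    apply/negP => xt; have := comp _ _ xt yin.
    by rewrite (negbTE nc1) (negbTE nc2).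
  by rewrite (negbTE xnt) /= gxy gy eqxx add0r.
rewrite addr0; case: ifP => [/andP[_ ->] //|_]; case: ifP => //.
Qed.

End Gen.

Section Ex.
Local Set Implicit Arguments.

Definition ex_e : rel 'I_4 := fun i j =>
  (((i : nat) == 0%N) && (((j : nat) == 1%N) || ((j : nat) == 2%N))) ||
  ((((i : nat) == 1%N) || ((i : nat) == 2%N)) && ((j : nat) == 3%N)).

Lemma rank_conn (T : finType) (e : rel T) (r : T -> nat) :
  (forall x y, e x y -> (r x < r y)%N) -> forall x y, connect e x y -> (r x <= r y)%N.
Proof.
move=> H x y /connectP [p pp ->]; elim: p x pp => [|z p IH] x //= /andP[exz pp].
exact: leq_trans (ltnW (H _ _ exz)) (IH z pp).
Qed.

Lemma ex_rank (r : nat -> nat) : (r 0 < r 1)%N -> (r 0 < r 2)%N -> (r 1 < r 3)%N -> (r 2 < r 3)%N ->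
  forall x y, ex_e x y -> (r x < r y)%N.
Proof.
move=> h1 h2 h3 h4 x y.
by rewrite /ex_e => /orP[/andP[/eqP-> /orP[/eqP->|/eqP->]]|/andP[/orP[/eqP->|/eqP->] /eqP->]].
Qed.

Lemma ex_acyc : acyclic ex_e.
Proof.
apply/forallP => x; apply/forallP => y; apply/implyP => exy; apply/negP => cyx.
have := @rank_conn _ _ (fun z : 'I_4 => nat_of_ord z) (@ex_rank id isT isT isT isT) _ _ cyx.
by rewrite leqNgt (@ex_rank id isT isT isT isT _ _ exy).
Qed.

Definition r2 (n : nat) : nat := if n == 1%N then 2%N else if n == 2%N then 1%N else n.

Lemma ex_nc : ~~ connect ex_e (@Ordinal 4 1 isT) (@Ordinal 4 2 isT) &&
              ~~ connect ex_e (@Ordinal 4 2 isT) (@Ordinal 4 1 isT).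
Proof.
apply/andP; split; apply/negP => c.
  by have := @rank_conn _ _ (fun z : 'I_4 => r2 z) (@ex_rank r2 isT isT isT isT) _ _ c.
by have := @rank_conn _ _ (fun z : 'I_4 => nat_of_ord z) (@ex_rank id isT isT isT isT) _ _ c.
Qed.

Lemma ex_src : sources ex_e = [set ord0].
Proof.
apply/setP => x; rewrite !inE.
case: x => -[|[|[|[|m]]]] Hm //.
- by apply/forallP => u; rewrite /ex_e /= !andbF.
- by apply/negbTE/negP => /forallP /(_ ord0).
- by apply/negbTE/negP => /forallP /(_ ord0).
- by apply/negbTE/negP => /forallP /(_ (@Ordinal 4 1 isT)).
Qed.

Lemma ex_snk : sinks ex_e = [set (@Ordinal 4 3 isT)].
Proof.
apply/setP => x; rewrite !inE.
case: x => -[|[|[|[|m]]]] Hm //.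
- by apply/negbTE/negP => /forallP /(_ (@Ordinal 4 1 isT)).
- by apply/negbTE/negP => /forallP /(_ (@Ordinal 4 3 isT)).
- by apply/negbTE/negP => /forallP /(_ (@Ordinal 4 3 isT)).
- by apply/forallP => u; rewrite /ex_e /=.
Qed.

Lemma ex_dag : typed_dag ex_e.
Proof. by rewrite /typed_dag ex_acyc ex_src ex_snk !cards1. Qed.

End Ex.

Definition ex_c (R : realFieldType) (x : 'I_4) : R :=
  if ((x : nat) == 1%N) || ((x : nat) == 2%N) then 1 else 0.

Theorem corollary3 (R : realFieldType) :
  (forall (V S : finType) (e : rel V) (gamma : V -> S) (c : V -> R)
          (M : S -> nat),
     typed_dag e -> (forall v, 0 <= c v) -> (forall s, (1 <= M s)%N) ->
     newB2 e gamma c M <= newB1 e gamma c M) /\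
  (exists (V S : finType) (e : rel V) (gamma : V -> S) (c : V -> R)
          (M : S -> nat),
     [/\ typed_dag e, (forall v, 0 <= c v), (forall s, (1 <= M s)%N) &
         newB2 e gamma c M < newB1 e gamma c M]).
Proof.
split.
  move=> V S e gamma c M /and3P[acyc _ _] c0 M1.
  have lh0 : 0 <= len_hat e gamma c M by apply: bigmax_ge_id.
  have B0 : 0 <= newB1 e gamma c M.
    rewrite /newB1 addr_ge0 // sumr_ge0 // => s _.
    by rewrite divr_ge0 // sumr_ge0.
  rewrite /newB2 /maxpath; apply: bigmax_le => // n _.
  apply: bigmax_le => // t pt.
  have H := @path_bound V R S e gamma c M (tval t) acyc c0 M1 pt.
  apply: le_trans H _.
  rewrite /newB1 lerD2r /len_hat /maxpath.
  apply: le_trans (le_bigmax _ _ n).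
  exact: (le_bigmax_cond _ (P := fun t : n.-tuple V => is_path e t) _ pt).
exists 'I_4, 'I_4, ex_e, (fun x => x), (@ex_c R), (fun _ => 1%N).
split.
- exact: ex_dag.
- by move=> v; rewrite /ex_c; case: ifP.
- by [].
have B1 : newB1 ex_e (fun x => x) (@ex_c R) (fun=> 1%N) = 1 + 1.
  rewrite /newB1.
  have -> : len_hat ex_e (fun x => x) (@ex_c R) (fun=> 1%N) = 0.
    apply/le_anti; rewrite bigmax_ge_id andbT.
    apply: bigmax_le => // n _; apply: bigmax_le => // t _.
    rewrite /plen big1 // => x _.
    by rewrite /chat (_ : (1%N)%:R = 1 :> R) // invr1 subrr mulr0.
  rewrite add0r (eq_bigr (fun s => @ex_c R s)); last first.
    by move=> s _; rewrite /vol divr1 big_pred1_eq.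
  rewrite !big_ord_recl big_ord0 /ex_c /=.
  lra.
have B2 : newB2 ex_e (fun x => x) (@ex_c R) (fun=> 1%N) <= 1.
  rewrite /newB2 /maxpath; apply: bigmax_le => // n _; apply: bigmax_le => // t pt.
  rewrite big1 ?addr0; last first.
    move=> s _; apply: big1 => v /ivs_mem [y _ /andP[_]].
    by rewrite inE => /and4P[/negbTE H1 H2 _ _]; rewrite /= H1 in H2.
  have ut : uniq t.
    by case: (tval t) pt => // x p; apply: (@path_uniq _ ex_e ex_acyc x p).
  have comp : forall y z, y \in tval t -> z \in tval t -> connect ex_e y z || connect ex_e z y.
    by case: (tval t) pt => // x p; apply: (@path_comp _ ex_e x p).
  have nc : forall y z : 'I_4, y \in tval t -> z \in tval t -> val y = 1%N -> val z = 2%N -> False.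
    move=> y z yt zt hy hz.
    have ey : y = Ordinal (isT : (1 < 4)%N) by apply: val_inj.
    have ez : z = Ordinal (isT : (2 < 4)%N) by apply: val_inj.
    have := comp y z yt zt; rewrite ey ez.
    by move: ex_nc => /andP[/negbTE -> /negbTE ->].
  rewrite /plen big_uniq // big_mkcond !big_ord_recl big_ord0 /ex_c /=.
  rewrite !if_same.
  case E1: (_ \in t); case E2: (_ \in t); try lra.
  by exfalso; apply: (nc _ _ E1 E2).
by rewrite B1; apply: le_lt_trans B2 _; lra.
Qed.
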